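(* Let $p\geq 2$ be an integer, $r=\lceil\log_2(p-1)\rceil$, and $m\geq 2r+2$. Let $b,c\geq 1$ be integers with $b+c\leq r+1$. Then the number of columns $v\in\{0,1,2\}^m$ for which there are sets $I,J\subseteq[m]$ with $|I|=c$, $|J|=b$, $\max I<\min J$, such that the set of marks of $v$ is exactly $I\times J$ and every pair in $I\times J$ is scarce, is at most $2^r(r-b-c+1)+2^{b+c-2}\leq r2^r$.
   Context: For a column $v\in\{0,1,2\}^m$, a mark of $v$ is a pair $(i,j)$ with $1\leq i<j\leq m$, $v_i=0$ and $v_j=1$ (a 0 above a 1). A pair $(i,j)$ with $1\leq i<j\leq m$ is scarce if $2^{m-1+i-j}<p-1$. *)

(* Defs.v *)
From mathcomp Require Import all_boot.
Set Implicit Arguments. Unset Strict Implicit. Unset Printing Implicit Defensive.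

(* Rows are 0-indexed: row k of the paper (1 <= k <= m) is the ordinal k-1 : 'I_m.
   A column is v : {ffun 'I_m -> 'I_3}, i.e. an element of {0,1,2}^m. *)

Definition marks (m : nat) (v : {ffun 'I_m -> 'I_3}) : {set 'I_m * 'I_m} :=
  [set ij : 'I_m * 'I_m | [&& (ij.1 < ij.2)%N, val (v ij.1) == 0 & val (v ij.2) == 1]].

(* scarce pair: i<j and 2^(m-1+i-j) < p-1 (shift-invariant in 0/1-indexing) *)
Definition scarce (p m : nat) (i j : 'I_m) : bool :=
  (i < j)%N && (2 ^ (m.-1 + i - j) < p - 1)%N.

Definition rr (p : nat) : nat := up_log 2 (p - 1).

(* Main.v *)
Require Import Defs.
From mathcomp Require Import all_boot.
From mathcomp Require Import zify.
Set Implicit Arguments. Unset Strict Implicit. Unset Printing Implicit Defensive.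
Lemma geo (M q t : nat) :
  \sum_(y < M) (if (q <= y) && (y < t) then 2 ^ y else 0) + 2 ^ q
  = 2 ^ (maxn q (minn M t)).
Proof.
elim: M => [|M IH].
  by rewrite big_ord0 add0n; congr (2 ^ _); lia.
rewrite big_ord_recr /= -addnA [_ + 2 ^ q]addnC addnA IH.
case: ifP => H.
  have -> : maxn q (minn M t) = M by lia.
  have -> : maxn q (minn M.+1 t) = M.+1 by lia.
  by rewrite expnS mul2n -addnn.
have -> : maxn q (minn M.+1 t) = maxn q (minn M t) by lia.
by rewrite addn0.
Qed.

Lemma cnt (M q t K : nat) :
  \sum_(y < M) (if (q <= y) && (y < t) then K else 0) = (minn M t - q) * K.
Proof.
elim: M => [|M IH]; first by rewrite big_ord0; have -> : minn 0 t - q = 0 by lia.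
rewrite big_ord_recr /= IH.
case: ifP => H.
  have -> : minn M.+1 t - q = (minn M t - q).+1 by lia.
  by rewrite mulSn addnC.
have -> : minn M.+1 t - q = minn M t - q by lia.
by rewrite addn0.
Qed.

Lemma arith (M n q1 q2 : nat) : q1 + q2 < n -> n <= M ->
  \sum_(x < M) \sum_(y < M)
     (if [&& q1 <= x, q2 <= y & x + y < n] then 2 ^ (x + y) else 0)
  <= 2 ^ n * (n - (q1 + q2) - 1) + 2 ^ (q1 + q2).
Proof.
move=> Hq Hn.
set t := n - q2.
set D := \sum_(x < M) _.
have step : forall x : 'I_M,
   \sum_(y < M) (if [&& q1 <= x, q2 <= y & x + y < n] then 2 ^ (x + y) else 0)
   + (if (q1 <= x) && (x < t) then 2 ^ q2 * 2 ^ x else 0)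
   <= (if (q1 <= x) && (x < t) then 2 ^ n else 0).
  move=> x; case: ifP => Hx.
    have -> : \sum_(y < M) (if [&& q1 <= x, q2 <= y & x + y < n] then 2 ^ (x + y) else 0)
         = 2 ^ x * \sum_(y < M) (if (q2 <= y) && (y < n - x) then 2 ^ y else 0).
      rewrite big_distrr /=; apply: eq_bigr => y _.
      have -> : [&& q1 <= x, q2 <= y & x + y < n] = (q2 <= y) && (y < n - x) by lia.
      by case: ifP; rewrite ?expnD ?muln0.
    rewrite [2 ^ q2 * _]mulnC -mulnDr geo.
    have -> : maxn q2 (minn M (n - x)) = n - x by lia.
    by rewrite -expnD; have -> : x + (n - x) = n by lia.
  rewrite addn0 leqn0 sum_nat_eq0; apply/forallP => y; apply/implyP => _.
  case: ifP => // Hy; lia.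
have H1 : D + \sum_(x < M) (if (q1 <= x) && (x < t) then 2 ^ q2 * 2 ^ x else 0)
          <= (t - q1) * 2 ^ n.
  rewrite /D -big_split /=.
  have -> : t - q1 = minn M t - q1 by lia.
  rewrite -cnt; exact: leq_sum.
have H2 : \sum_(x < M) (if (q1 <= x) && (x < t) then 2 ^ q2 * 2 ^ x else 0)
          = 2 ^ q2 * \sum_(x < M) (if (q1 <= x) && (x < t) then 2 ^ x else 0).
  rewrite big_distrr; apply: eq_bigr => x _; case: ifP => _ /=; by rewrite ?muln0.
move: H1; rewrite H2.
set G := \sum_(x < M) _.
have HG : G + 2 ^ q1 = 2 ^ t.
  rewrite /G geo; have -> : maxn q1 (minn M t) = t by lia. by [].
have Hn2 : 2 ^ n = 2 ^ q2 * 2 ^ t by rewrite -expnD; congr (2 ^ _); lia.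
rewrite Hn2 -HG expnD.
have -> : n - (q1 + q2) - 1 = t - q1 - 1 by lia.
have -> : t - q1 = (t - q1 - 1).+1 by lia.
set s := t - q1 - 1.
rewrite mulSn => H.
rewrite [2 ^ q1 * 2 ^ q2]mulnC.
nia.
Qed.

Section Facts.
Variables (m : nat) (v : {ffun 'I_m -> 'I_3}) (I J : {set 'I_m}) (x z : 'I_m).
Hypotheses (HM : marks v = setX I J) (xI : x \in I) (zJ : z \in J)
  (Imax : forall i, i \in I -> i <= x) (Jmin : forall j, j \in J -> z <= j)
  (xz : x < z).

Lemma inmarks (i j : 'I_m) :
  ((i, j) \in marks v) = [&& i < j, val (v i) == 0 & val (v j) == 1].
Proof. by rewrite inE. Qed.

Lemma L0I i : i \in I -> val (v i) = 0.
Proof.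
move=> iI; have : (i, z) \in setX I J by rewrite in_setX iI zJ.
by rewrite -HM inmarks => /and3P [_ /eqP -> _].
Qed.

Lemma L0J j : j \in J -> val (v j) = 1.
Proof.
move=> jJ; have : (x, j) \in setX I J by rewrite in_setX xI jJ.
by rewrite -HM inmarks => /and3P [_ _ /eqP ->].
Qed.

Lemma Lb i : val (v i) = 0 -> i < z -> i \in I.
Proof.
move=> h0 hz; have : (i, z) \in marks v by rewrite inmarks hz h0 (L0J zJ).
by rewrite HM in_setX => /andP [].
Qed.

Lemma Lc j : val (v j) = 1 -> x < j -> j \in J.
Proof.
move=> h1 hx; have : (x, j) \in marks v by rewrite inmarks hx h1 (L0I xI).
by rewrite HM in_setX => /andP [].
Qed.

Lemma Ld i : val (v i) = 1 -> i <= x -> forall i', i' \in I -> i < i'.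
Proof.
move=> h1 hx i' i'I; case: (ltngtP i i') => // h.
- have : (i', i) \in marks v by rewrite inmarks h h1 (L0I i'I).
  rewrite HM in_setX => /andP [_ /Jmin]; lia.
- have e : i = i' by apply: val_inj.
  by move: h1; rewrite e (L0I i'I).
Qed.

Lemma Le j : val (v j) = 0 -> z <= j -> forall j', j' \in J -> j' < j.
Proof.
move=> h0 hz j' j'J; case: (ltngtP j' j) => // h.
- have : (j, j') \in marks v by rewrite inmarks h h0 (L0J j'J).
  rewrite HM in_setX => /andP [/Imax]; lia.
- have e : j = j' by apply: val_inj.
  by move: h0; rewrite e (L0J j'J).
Qed.

Lemma Lf (i : 'I_m) : x < i -> i < z -> val (v i) = 2.
Proof.
move=> h1 h2; have hv : val (v i) < 3 by exact: ltn_ord.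
move: hv; case E: (val (v i)) => [|[|[|n]]] // H.
- by have := Imax (Lb E h2); lia.
- by have := Jmin (Lc E h1); lia.
Qed.
End Facts.

Definition okw m (v : {ffun 'I_m -> 'I_3}) (I J : {set 'I_m}) (x z : 'I_m) : Prop :=
  [/\ marks v = setX I J, x \in I, z \in J, (forall i, i \in I -> i <= x)
      & ((forall j, j \in J -> z <= j) /\ x < z)].

Section W.
Variables (m : nat) (v : {ffun 'I_m -> 'I_3}) (I J : {set 'I_m}) (x z : 'I_m).
Hypothesis ok : okw v I J x z.
Ltac go lem := case: ok => HM xI zJ Imax [Jmin xz]; eapply lem; eassumption.
Lemma W0I i : i \in I -> val (v i) = 0. Proof. go L0I. Qed.
Lemma W0J j : j \in J -> val (v j) = 1. Proof. go L0J. Qed.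
Lemma Wb i : val (v i) = 0 -> i < z -> i \in I. Proof. go Lb. Qed.
Lemma Wc j : val (v j) = 1 -> x < j -> j \in J. Proof. go Lc. Qed.
Lemma Wd i : val (v i) = 1 -> i <= x -> forall i', i' \in I -> i < i'. Proof. go Ld. Qed.
Lemma We j : val (v j) = 0 -> z <= j -> forall j', j' \in J -> j' < j. Proof. go Le. Qed.
Lemma Wf (i : 'I_m) : x < i -> i < z -> val (v i) = 2. Proof. go Lf. Qed.
Lemma WxI : x \in I. Proof. by case: ok. Qed.
Lemma WzJ : z \in J. Proof. by case: ok. Qed.
Lemma Wmax i : i \in I -> i <= x. Proof. by case: ok => _ _ _ h _; apply: h. Qed.
Lemma Wmin j : j \in J -> z <= j. Proof. by case: ok => _ _ _ _ [h _]; apply: h. Qed.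
Lemma Wxz : x < z. Proof. by case: ok => _ _ _ _ [_ h]. Qed.
End W.

Lemma v3 m (v : {ffun 'I_m -> 'I_3}) i : val (v i) < 3.
Proof. exact: ltn_ord. Qed.

Lemma keyI m (v v' : {ffun 'I_m -> 'I_3}) I J I' J' x z :
  okw v I J x z -> okw v' I' J' x z ->
  (forall i : 'I_m, i < x -> (val (v i) != 2) = (val (v' i) != 2)) ->
  forall i, i \in I -> i \notin I' -> forall i', i' \in I' -> i' \in I.
Proof.
move=> ok ok' Hb i iI iI' i' i'I'.
have vi0 := W0I ok iI; have vi'0 := W0I ok' i'I'.
have hix := Wmax ok iI; have hi'x := Wmax ok' i'I'.
have xz := Wxz ok.
case: (ltnP i' i) => hii.
- case: (ltngtP i x) => hx.
  + have h2 : val (v' i) != 2 by rewrite -(Hb _ hx) vi0.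
    have [E|E] : val (v' i) = 0 \/ val (v' i) = 1 by move: h2 (v3 v' i); lia.
    * by move: iI'; rewrite (Wb ok' E) //; lia.
    * have := Wd ok' E _ i'I'; lia.
  + lia.
  + have e : i = x by apply: val_inj.
    by move: iI'; rewrite e (WxI ok').
- case: (ltngtP i' x) => hx.
  + have h2 : val (v i') != 2 by rewrite (Hb _ hx) vi'0.
    have [E|E] : val (v i') = 0 \/ val (v i') = 1 by move: h2 (v3 v i'); lia.
    * by apply: (Wb ok E); lia.
    * have := Wd ok E _ iI; lia.
  + lia.
  + have -> : i' = x by apply: val_inj.
    exact: WxI ok.
Qed.

Lemma keyJ m (v v' : {ffun 'I_m -> 'I_3}) I J I' J' x z :
  okw v I J x z -> okw v' I' J' x z ->
  (forall j : 'I_m, z < j -> (val (v j) != 2) = (val (v' j) != 2)) ->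
  forall j, j \in J -> j \notin J' -> forall j', j' \in J' -> j' \in J.
Proof.
move=> ok ok' Hb j jJ jJ' j' j'J'.
have vj1 := W0J ok jJ; have vj'1 := W0J ok' j'J'.
have hzj := Wmin ok jJ; have hzj' := Wmin ok' j'J'.
have xz := Wxz ok.
case: (ltnP j j') => hjj.
- case: (ltngtP z j) => hz.
  + have h2 : val (v' j) != 2 by rewrite -(Hb _ hz) vj1.
    have [E|E] : val (v' j) = 0 \/ val (v' j) = 1 by move: h2 (v3 v' j); lia.
    * have := We ok' E _ j'J'; lia.
    * by move: jJ'; rewrite (Wc ok' E) //; lia.
  + lia.
  + have e : j = z by apply: val_inj.
    by move: jJ'; rewrite e (WzJ ok').
- case: (ltngtP z j') => hz.
  + have h2 : val (v j') != 2 by rewrite (Hb _ hz) vj'1.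
    have [E|E] : val (v j') = 0 \/ val (v j') = 1 by move: h2 (v3 v j'); lia.
    * have := We ok E _ jJ; lia.
    * by apply: (Wc ok E); lia.
  + lia.
  + have -> : j' = z by apply: val_inj.
    exact: WzJ ok.
Qed.

Lemma eq_upper (T : finType) (A B : {set T}) :
  (forall i, i \in A -> i \notin B -> B \subset A) ->
  (forall i, i \in B -> i \notin A -> A \subset B) ->
  #|A| = #|B| -> A = B.
Proof.
move=> h1 h2 hc; apply/eqP.
case: (boolP (A \subset B)) => sAB.
  by rewrite eqEcard sAB hc leqnn.
have [i iA iB] : exists2 i, i \in A & i \notin B.
  by move/subsetPn: sAB => [i iA iB]; exists i.
by rewrite eq_sym eqEcard (h1 i iA iB) hc leqnn.
Qed.

Lemma injv m (v v' : {ffun 'I_m -> 'I_3}) I J I' J' x z :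
  okw v I J x z -> okw v' I' J' x z -> #|I| = #|I'| -> #|J| = #|J'| ->
  (forall i : 'I_m, i < x -> (val (v i) != 2) = (val (v' i) != 2)) ->
  (forall j : 'I_m, z < j -> (val (v j) != 2) = (val (v' j) != 2)) ->
  v = v'.
Proof.
move=> ok ok' cI cJ HbI HbJ.
have eI : I = I'.
  apply: eq_upper cI => i iA iB; apply/subsetP => i'.
  - exact: keyI ok ok' HbI i iA iB i'.
  - by apply: keyI ok' ok _ i iA iB i' => k hk; rewrite HbI.
have eJ : J = J'.
  apply: eq_upper cJ => i iA iB; apply/subsetP => i'.
  - exact: keyJ ok ok' HbJ i iA iB i'.
  - by apply: keyJ ok' ok _ i iA iB i' => k hk; rewrite HbJ.
subst I' J'.
apply/ffunP => i; apply: val_inj.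
have h3 := v3 v i; have h3' := v3 v' i.
case: (ltngtP i x) => hx.
- have := HbI _ hx.
  case: (boolP (i \in I)) => iI.
    by rewrite (W0I ok iI) (W0I ok' iI).
  have xz := Wxz ok.
  case E: (val (v i)) => [|[|[|n]]]; case E': (val (v' i)) => [|[|[|n']]] //= _; try lia.
  + by move: iI; rewrite (Wb ok E) //; lia.
  + by move: iI; rewrite (Wb ok' E') //; lia.
- case: (ltngtP i z) => hz.
  + by rewrite (Wf ok hx hz) (Wf ok' hx hz).
  + have := HbJ _ hz.
    case: (boolP (i \in J)) => iJ.
      by rewrite (W0J ok iJ) (W0J ok' iJ).
    case E: (val (v i)) => [|[|[|n]]]; case E': (val (v' i)) => [|[|[|n']]] //= _; try lia.
    * by move: iJ; rewrite (Wc ok' E') //; lia.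
    * by move: iJ; rewrite (Wc ok E) //; lia.
  + have -> : i = z by apply: val_inj.
    by rewrite (W0J ok (WzJ ok)) (W0J ok' (WzJ ok)).
- have -> : i = x by apply: val_inj.
  by rewrite (W0I ok (WxI ok)) (W0I ok' (WxI ok)).
Qed.

Lemma shiftz_lt m (z : 'I_m) (j : 'I_(m.-1 - z)) : z.+1 + j < m.
Proof. have := ltn_ord j; have := ltn_ord z; lia. Qed.
Definition shiftz m (z : 'I_m) (j : 'I_(m.-1 - z)) : 'I_m := Ordinal (shiftz_lt j).

Lemma scarce_lt p m (i j : 'I_m) : 2 <= p -> scarce p i j -> i < j /\ m.-1 + i - j < rr p.
Proof.
move=> hp /andP [ij h]; split => //.
rewrite ltnNge; apply/negP => hr.
have h1 : p - 1 <= 2 ^ rr p by apply: up_logP.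
have h2 : 2 ^ rr p <= 2 ^ (m.-1 + i - j) by apply: leq_pexp2l.
lia.
Qed.

Lemma sum_in (T : finType) (A : {set T}) : \sum_(v : T) (v \in A : nat) = #|A|.
Proof. by rewrite -sum1_card [RHS]big_mkcond; apply: eq_bigr => v _; case: (v \in A). Qed.

Theorem mainTheorem8 (p m b c : nat) :
  (2 <= p)%N -> (2 * rr p + 2 <= m)%N -> (1 <= b)%N -> (1 <= c)%N ->
  (b + c <= rr p + 1)%N ->
  let N := #|[set v : {ffun 'I_m -> 'I_3} |
               [exists I : {set 'I_m}, exists J : {set 'I_m},
                  [&& #|I| == c, #|J| == b,
                      [forall i in I, forall j in J, (i < j)%N],
                      marks v == setX I J &
                      [forall i in I, forall j in J, scarce p i j]]]]| in
  (N <= 2 ^ rr p * (rr p + 1 - (b + c)) + 2 ^ (b + c - 2))%N /\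
  (2 ^ rr p * (rr p + 1 - (b + c)) + 2 ^ (b + c - 2) <= rr p * 2 ^ rr p)%N.
Proof.
move=> Hp Hm Hb Hc Hbc N.
set r := rr p.
split; last first.
  have h1 : 2 ^ (b + c - 2) <= 2 ^ r by apply: leq_pexp2l => //; lia.
  have h2 : 2 ^ r * (r + 1 - (b + c)) <= 2 ^ r * (r - 1) by apply: leq_mul => //; lia.
  have -> : r * 2 ^ r = 2 ^ r * (r - 1) + 2 ^ r.
    have -> : r = (r - 1).+1 by lia.
    by rewrite mulSn addnC mulnC; congr (_ + _); congr (_ * _); lia.
  exact: leq_add.
rewrite /N; set S := (X in #|X|).
pose Sxz (x z : 'I_m) := [set v : {ffun 'I_m -> 'I_3} |
  [exists I : {set 'I_m}, exists J : {set 'I_m},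
    [&& #|I| == c, #|J| == b, [forall i in I, forall j in J, scarce p i j],
        marks v == setX I J &
        [&& x \in I, z \in J, [forall i in I, i <= x] & [forall j in J, z <= j]]]]].
have step1 : #|S| <= \sum_(x : 'I_m) \sum_(z : 'I_m) #|Sxz x z|.
  rewrite -sum1_card.
  apply: (@leq_trans (\sum_(v in S) \sum_(x : 'I_m) \sum_(z : 'I_m) (v \in Sxz x z : nat))).
    apply: leq_sum => v; rewrite inE => /existsP [I /existsP [J /and5P [cI cJ ord HM sc]]].
    have I0 : I != set0 by rewrite -card_gt0 (eqP cI).
    have J0 : J != set0 by rewrite -card_gt0 (eqP cJ).
    case/set0Pn: I0 => i0 i0I; case/set0Pn: J0 => j0 j0J.
    case: (arg_maxnP val i0I) => x xI xmax.
    case: (arg_minnP val j0J) => z zJ zmin.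
    rewrite (bigD1 x) //= (bigD1 z) //=.
    have -> : v \in Sxz x z.
      rewrite inE; apply/existsP; exists I; apply/existsP; exists J.
      rewrite cI cJ sc HM /=.
      apply/and4P; split; [exact: xI | exact: zJ | | ];
        apply/forallP => k; apply/implyP => hk; [exact: xmax | exact: zmin].
    by rewrite /= add1n addSn.
  apply: (@leq_trans (\sum_(v : {ffun 'I_m -> 'I_3}) \sum_(x : 'I_m) \sum_(z : 'I_m) (v \in Sxz x z : nat))).
    by rewrite big_mkcond /=; apply: leq_sum => v _; case: (v \in S).
  rewrite exchange_big /=; apply: leq_sum => x _.
  rewrite exchange_big /=; apply: leq_sum => z _.
  by rewrite sum_in.
have mem_ok : forall x z v, v \in Sxz x z -> exists I J : {set 'I_m},
    [/\ #|I| = c, #|J| = b, okw v I J x z &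
        (forall i j, i \in I -> j \in J -> scarce p i j)].
  move=> x z v; rewrite inE => /existsP [I /existsP [J /and5P [cI cJ sc HM /and4P [xI zJ fI fJ]]]].
  have sc' : forall i j, i \in I -> j \in J -> scarce p i j.
    by move=> i j iI jJ; move/forall_inP: sc => /(_ i iI) /forall_inP /(_ j jJ).
  exists I, J; split; [exact/eqP | exact/eqP | | exact: sc'].
  split; [exact/eqP | done | done | | split].
  - by move=> i iI; move/forall_inP: fI => /(_ i iI).
  - by move=> j jJ; move/forall_inP: fJ => /(_ j jJ).
  - by case: (scarce_lt Hp (sc' x z xI zJ)).
have step2 : forall x z : 'I_m, #|Sxz x z| <=
    (if [&& c.-1 <= x, b.-1 <= m.-1 - z & x + (m.-1 - z) < r] then 2 ^ (x + (m.-1 - z)) else 0).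
  move=> x z; case: (set_0Vmem (Sxz x z)) => [-> | [v0 v0S]]; first by rewrite cards0.
  have [I [J [cI cJ ok sc]]] := mem_ok _ _ _ v0S.
  have h1 : c.-1 <= x.
    have : #|I| <= #|'I_x.+1|.
      apply: (@leq_card_in _ _ (fun i : 'I_m => insubd (ord0 : 'I_x.+1) (val i))).
      move=> i j iI jI /(congr1 val); rewrite !val_insubd ltnS (Wmax ok iI) ltnS (Wmax ok jI).
      exact: val_inj.
    rewrite card_ord cI; lia.
  have h2 : b.-1 <= m.-1 - z.
    have : #|J| <= #|'I_(m.-1 - z).+1|.
      apply: (@leq_card_in _ _ (fun j : 'I_m => insubd (ord0 : 'I_(m.-1 - z).+1) (j - z))).
      move=> i j iJ jJ /(congr1 val).
      have hi := Wmin ok iJ; have hj := Wmin ok jJ.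
      have hi' : i - z < (m.-1 - z).+1 by have := ltn_ord i; lia.
      have hj' : j - z < (m.-1 - z).+1 by have := ltn_ord j; lia.
      rewrite !val_insubd hi' hj' => e; apply: ord_inj; lia.
    rewrite card_ord cJ; lia.
  have h3 : x + (m.-1 - z) < r.
    have [xz hs] := scarce_lt Hp (sc x z (WxI ok) (WzJ ok)).
    have := ltn_ord z; rewrite -/r in hs; lia.
  rewrite h1 h2 h3 /=.
  pose g := fun v : {ffun 'I_m -> 'I_3} =>
    ([ffun i : 'I_x => val (v (widen_ord (ltnW (ltn_ord x)) i)) != 2],
     [ffun j : 'I_(m.-1 - z) => val (v (shiftz j)) != 2]).
  have : #|Sxz x z| <= #|{: {ffun 'I_x -> bool} * {ffun 'I_(m.-1 - z) -> bool}}|.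
    apply: (@leq_card_in _ _ g) => v v' vS v'S H.
    have [I1 [J1 [cI1 cJ1 ok1 _]]] := mem_ok _ _ _ vS.
    have [I2 [J2 [cI2 cJ2 ok2 _]]] := mem_ok _ _ _ v'S.
    apply: (injv ok1 ok2); [by rewrite cI1 cI2 | by rewrite cJ1 cJ2 | |].
    + move=> i hi; have := congr1 (fun f : {ffun 'I_x -> bool} * {ffun 'I_(m.-1 - z) -> bool} => f.1 (Ordinal hi)) H; rewrite /= !ffunE.
      set w := widen_ord _ _; have -> // : w = i by apply: val_inj.
    + move=> j hj.
      have hj' : j - z.+1 < m.-1 - z by have := ltn_ord j; lia.
      have := congr1 (fun f : {ffun 'I_x -> bool} * {ffun 'I_(m.-1 - z) -> bool} => f.2 (Ordinal hj')) H; rewrite /= !ffunE.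
      set w := shiftz _; have -> // : w = j by apply: val_inj => /=; lia.
  by rewrite card_prod !card_ffun card_bool !card_ord -expnD.
have step3 : \sum_(x : 'I_m) \sum_(z : 'I_m)
    (if [&& c.-1 <= x, b.-1 <= m.-1 - z & x + (m.-1 - z) < r] then 2 ^ (x + (m.-1 - z)) else 0)
  = \sum_(x < m) \sum_(y < m)
     (if [&& c.-1 <= x, b.-1 <= y & x + y < r] then 2 ^ (x + y) else 0).
  apply: eq_bigr => x _; rewrite (reindex_inj rev_ord_inj) /=.
  apply: eq_bigr => y _; have -> // : m.-1 - (m - y.+1) = y by have := ltn_ord y; lia.
have step4 := arith (M := m) (n := r) (q1 := c.-1) (q2 := b.-1).
have e1 : r - (c.-1 + b.-1) - 1 = r + 1 - (b + c) by lia.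
have e2 : c.-1 + b.-1 = b + c - 2 by lia.
rewrite e1 e2 in step4.
apply: (leq_trans step1); apply: (@leq_trans (\sum_(x : 'I_m) \sum_(z : 'I_m)
    (if [&& c.-1 <= x, b.-1 <= m.-1 - z & x + (m.-1 - z) < r] then 2 ^ (x + (m.-1 - z)) else 0))).
  by apply: leq_sum => x _; apply: leq_sum => z _; apply: step2.
rewrite step3; apply: step4; lia.
Qed.
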